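(* Every EDT-Nash equilibrium is an EDT equilibrium. In extensive-form games without absentmindedness, a strategy profile is an EDT-Nash equilibrium if and only if it is a CDT-Nash equilibrium. In extensive-form games with perfect recall, a strategy profile is an EDT-Nash equilibrium if and only if it is a Nash equilibrium.
   Context: An extensive-form game consists of a finite rooted tree (nodes $\mathcal H$, leaves $\mathcal Z$, actions $A_h$), players $\mathcal N$ plus chance (with fixed action distributions), utilities $u_i:\mathcal Z\to\mathbb R_{\ge0}$, and partitions $\mathcal I_i$ of each player's nodes into infosets with common action sets $A_I$. For a node $h$ with root-to-$h$ path $(h_0,\dots,h_{d-1})$ (excluding $h$), $\mathrm{obs}(h)=(i_k,I_k,a_k)_k$ lists the player at, infoset of, and action taken at each $h_k$; $\mathrm{obs}_i(h)$ is the subsequence with $i_k=i$. Player $i$ has perfect recall if $\mathrm{obs}_i(h)=\mathrm{obs}_i(h')$ for $h,h'$ in a common infoset of $i$; the game has perfect recall if all players do. The game has absentmindedness if some infoset appears more than once among the $I_k$ in $\mathrm{obs}(h)$ for some $h$. A behavioral strategy $\pi_i$ assigns $\pi_i(\cdot\mid I)\in\Delta(A_I)$; $\mathbb P(h\mid\pi)$ is the reach probability of $h$; $U_i(\pi)=\sum_z\mathbb P(z\mid\pi)u_i(z)$; realization equivalence means equal reach probabilities at all nodes. $\pi_i^{I\mapsto\sigma}$ plays $\sigma$ at $I$, otherwise $\pi_i$. Nash: each $\pi_i\in\arg\max U_i(\cdot,\pi_{-i})$. EDT equilibrium: for all $i$, $I\in\mathcal I_i$, $\pi_i(\cdot\mid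 I)\in\arg\max_{\sigma}U_i(\pi_i^{I\mapsto\sigma},\pi_{-i})$. CDT equilibrium: each $\pi_i$ is a KKT point of maximizing $U_i(\cdot,\pi_{-i})$ over $\prod_I\Delta(A_I)$. In a single-player game (Player 1): let $I^{\mathrm{1st}}$ be the nodes $h\in I$ such that $I$ does not appear in $\mathrm{obs}(h)$, $\mathbb P(I\mid\pi)=\sum_{h\in I^{\mathrm{1st}}}\mathbb P(h\mid\pi)$, and $\mathrm{Fr}(I\mid\pi)=\sum_{h\in I}\mathbb P(h\mid\pi)$. The CDT utility of $\sigma\in\Delta(A_I)$ is $U_1^{\mathrm{CDT}}(\sigma\mid\pi,I)=U_1(\pi)+\sum_{a\in A_I}(\sigma(a)-\pi(a\mid I))\,\partial U_1(\pi)/\partial\pi(a\mid I)$, where $U_1$ is viewed as a polynomial in the variables $\pi(a\mid I)$. A strategy $\pi$ is EDT-rational (resp. CDT-rational) if there is a sequence $(\pi^{(k)},\varepsilon^{(k)})_{k\in\mathbb N}$ with each $\pi^{(k)}$ fully mixed ($\pi^{(k)}(a\mid I)>0$ for all $I,a$), $\pi^{(k)}\to\pi$, $\varepsilon^{(k)}>0$, $\varepsilon^{(k)}\to0$, and for each $k$, all $I$ with $\mathbb P(I\mid\pi^{(k)})>0$ (resp. $\mathrm{Fr}(I\mid\pi^{(k)})>0$) and all $\sigma\in\Delta(A_I)$: $\frac{1}{\mathbb P(I\mid\pi^{(k)})}(U_1(\pi^{(k),I\mapsto\sigma})-U_1(\pi^{(k)}))\le\varepsilon^{(k)}$ (resp.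 $\frac{1}{\mathrm{Fr}(I\mid\pi^{(k)})}(U_1^{\mathrm{CDT}}(\sigma\mid\pi^{(k)},I)-U_1(\pi^{(k)}))\le\varepsilon^{(k)}$). A profile $\pi$ is an EDT-Nash (resp. CDT-Nash) equilibrium if it is an EDT (resp. CDT) equilibrium and for each player $i$, in the single-player game from $i$'s perspective where the others play the fixed $\pi_{-i}$, $\pi_i$ is realization-equivalent to an EDT-rational (resp. CDT-rational) strategy. *)

(* Defs.v *)
From HB Require Import structures.
From mathcomp Require Import all_boot all_order all_algebra.
From mathcomp Require Import all_classical all_reals topology normedtype sequences.
Set Implicit Arguments. Unset Strict Implicit. Unset Printing Implicit Defensive.
Import Order.TTheory GRing.Theory Num.Theory.
Import numFieldTopology.Exports numFieldNormedType.Exports.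
Local Open Scope classical_set_scope.
Local Open Scope ring_scope.

(*   acts I = A_I.  Chance nodes carry a fixed distribution p over the       *)
(*   actions leaving them; leaves carry a utility vector Pl -> R.            *)
(*   A node is identified by the sequence of actions from the root to it.    *)

Section Games.
Variable R : realType.
Variables Pl Info Act : finType.

Inductive label := Chance of (Act -> R) | Dec of Info.

Inductive tree :=
| Leaf : (Pl -> R) -> tree
| Node : label -> seq (Act * tree) -> tree.

Record game := Game {
  gtree : tree;
  owner : Info -> Pl;
  acts  : Info -> {set Act} }.

Definition child (cs : seq (Act * tree)) (a : Act) : option tree :=
  ohead [seq p.2 | p <- cs & p.1 == a].

Fixpoint sub (t : tree) (s : seq Act) : option tree :=
  match s with
  | [::] => Some t
  | a :: s' =>
      if t is Node _ cs then
        (if child cs a is Some t' then sub t' s' else None)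
      else None
  end.

Fixpoint steps (t : tree) (s : seq Act) : seq (label * Act) :=
  match s with
  | [::] => [::]
  | a :: s' =>
      match t with
      | Node l cs =>
          match child cs a with
          | Some t' => (l, a) :: steps t' s'
          | None => [::]
          end
      | Leaf _ => [::]
      end
  end.

Fixpoint nodes (t : tree) : seq (seq Act) :=
  match t with
  | Leaf _ => [:: [::]]
  | Node _ cs =>
      [::] :: (fix go (cs : seq (Act * tree)) : seq (seq Act) :=
                 match cs with
                 | [::] => [::]
                 | (a, t') :: cs' => map (cons a) (nodes t') ++ go cs'
                 end) cs
  end.

Variable G : game.

Definition Nodes := nodes (gtree G).

Definition inI (I : Info) (h : seq Act) : bool :=
  if sub (gtree G) h is Some (Node (Dec J) _) then J == I else false.

Definition isLeaf (h : seq Act) : bool :=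
  if sub (gtree G) h is Some (Leaf _) then true else false.

Definition util (h : seq Act) (i : Pl) : R :=
  if sub (gtree G) h is Some (Leaf u) then u i else 0.

Definition obs (h : seq Act) : seq (Pl * Info * Act) :=
  pmap (fun p : label * Act =>
          if p.1 is Dec J then Some (owner G J, J, p.2) else None)
       (steps (gtree G) h).

Definition obs_i (i : Pl) (h : seq Act) : seq (Pl * Info * Act) :=
  [seq q <- obs h | q.1.1 == i].

Definition perfect_recall : Prop :=
  forall I h h', h \in Nodes -> h' \in Nodes -> inI I h -> inI I h' ->
    obs_i (owner G I) h = obs_i (owner G I) h'.

Definition absentminded : Prop :=
  exists h, h \in Nodes /\ ~~ uniq [seq q.1.2 | q <- obs h].

Definition wf_game : Prop :=
  (forall I, (0 < #|acts G I|)%N) /\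
  forall h, h \in Nodes ->
    match sub (gtree G) h with
    | Some (Leaf u) => forall i, 0 <= u i
    | Some (Node l cs) =>
        uniq (map fst cs) /\
        match l with
        | Dec J => forall a, (a \in map fst cs) = (a \in acts G J)
        | Chance p => (forall a, a \in map fst cs -> 0 <= p a) /\
                      \sum_(a <- map fst cs) p a = 1
        end
    | None => True
    end.

Definition isDist (S : {set Act}) (sigma : Act -> R) : Prop :=
  (forall a, a \in S -> 0 <= sigma a) /\ \sum_(a in S) sigma a = 1.

Definition valid_profile (pi : Info -> Act -> R) : Prop :=
  forall I, isDist (acts G I) (pi I).

Definition valid_strat (i : Pl) (y : Info -> Act -> R) : Prop :=
  forall I, owner G I = i -> isDist (acts G I) (y I).

Definition replace (i : Pl) (y pi : Info -> Act -> R) : Info -> Act -> R :=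
  fun I => if owner G I == i then y I else pi I.

Definition deviate (pi : Info -> Act -> R) (I : Info) (sigma : Act -> R) :
  Info -> Act -> R := fun J => if J == I then sigma else pi J.

Definition factor (pi : Info -> Act -> R) (l : label) (a : Act) : R :=
  match l with Chance p => p a | Dec J => pi J a end.

Definition reach (pi : Info -> Act -> R) (h : seq Act) : R :=
  \prod_(p <- steps (gtree G) h) factor pi p.1 p.2.

Definition EU (i : Pl) (pi : Info -> Act -> R) : R :=
  \sum_(h <- Nodes | isLeaf h) reach pi h * util h i.

(* U_i as a polynomial in the single variable pi(a|I), all the other
   variables fixed at their values in pi *)
Definition Upoly (i : Pl) (pi : Info -> Act -> R) (I : Info) (a : Act) :
  {poly R} :=
  \sum_(h <- Nodes | isLeaf h)
    (\prod_(p <- steps (gtree G) h)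
       (if p.1 is Dec J then
          (if (J == I) && (p.2 == a) then 'X else (pi J p.2)%:P)
        else (factor pi p.1 p.2)%:P)) * (util h i)%:P.

Definition pdU (i : Pl) (pi : Info -> Act -> R) (I : Info) (a : Act) : R :=
  ((Upoly i pi I a)^`()).[pi I a].

Definition Nash (pi : Info -> Act -> R) : Prop :=
  forall i y, valid_strat i y -> EU i (replace i y pi) <= EU i pi.

Definition EDT_eq (pi : Info -> Act -> R) : Prop :=
  forall I sigma, isDist (acts G I) sigma ->
    EU (owner G I) (deviate pi I sigma) <= EU (owner G I) pi.

(* KKT conditions for maximizing U_i(., pi_{-i}) over prod_I Delta(A_I):
   dU/dpi(a|I) + mu(I,a) = lambda(I), mu >= 0, mu(I,a) pi(a|I) = 0
   (primal feasibility is valid_profile) *)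
Definition CDT_eq (pi : Info -> Act -> R) : Prop :=
  forall i, exists (lam : Info -> R) (mu : Info -> Act -> R),
    forall I a, owner G I = i -> a \in acts G I ->
      [/\ 0 <= mu I a, mu I a * pi I a = 0 & pdU i pi I a + mu I a = lam I].

Definition firstIn (I : Info) (h : seq Act) : bool :=
  inI I h && (I \notin [seq q.1.2 | q <- obs h]).

Definition PI (pi : Info -> Act -> R) (I : Info) : R :=
  \sum_(h <- Nodes | firstIn I h) reach pi h.

Definition Fr (pi : Info -> Act -> R) (I : Info) : R :=
  \sum_(h <- Nodes | inI I h) reach pi h.

Definition UCDT (i : Pl) (sigma : Act -> R) (pi : Info -> Act -> R) (I : Info) : R :=
  EU i pi + \sum_(a in acts G I) (sigma a - pi I a) * pdU i pi I a.

Definition approx_seq (i : Pl) (y : Info -> Act -> R)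
  (x : nat -> Info -> Act -> R) (eps : nat -> R) : Prop :=
  [/\ forall k, valid_strat i (x k),
      forall k I a, owner G I = i -> a \in acts G I -> 0 < x k I a,
      forall I a, owner G I = i -> a \in acts G I ->
        (fun k => x k I a) @ \oo --> y I a,
      forall k, 0 < eps k
    & eps @ \oo --> 0].

Definition EDT_rational (i : Pl) (pi y : Info -> Act -> R) : Prop :=
  exists x eps, approx_seq i y x eps /\
    forall k I sigma, owner G I = i ->
      0 < PI (replace i (x k) pi) I -> isDist (acts G I) sigma ->
      (EU i (deviate (replace i (x k) pi) I sigma) - EU i (replace i (x k) pi))
        / PI (replace i (x k) pi) I <= eps k.

Definition CDT_rational (i : Pl) (pi y : Info -> Act -> R) : Prop :=
  exists x eps, approx_seq i y x eps /\
    forall k I sigma, owner G I = i ->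
      0 < Fr (replace i (x k) pi) I -> isDist (acts G I) sigma ->
      (UCDT i sigma (replace i (x k) pi) I - EU i (replace i (x k) pi))
        / Fr (replace i (x k) pi) I <= eps k.

Definition real_equiv (i : Pl) (pi y : Info -> Act -> R) : Prop :=
  forall h, h \in Nodes -> reach (replace i y pi) h = reach pi h.

Definition EDT_Nash (pi : Info -> Act -> R) : Prop :=
  EDT_eq pi /\ forall i, exists y,
    [/\ valid_strat i y, EDT_rational i pi y & real_equiv i pi y].

Definition CDT_Nash (pi : Info -> Act -> R) : Prop :=
  CDT_eq pi /\ forall i, exists y,
    [/\ valid_strat i y, CDT_rational i pi y & real_equiv i pi y].

End Games.

(* Main.v *)
Require Import Defs.
From HB Require Import structures.
From mathcomp Require Import all_boot all_order all_algebra.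
From mathcomp Require Import all_classical all_reals topology normedtype sequences.
From Stdlib Require List.
From mathcomp Require Import ring lra.
Set Implicit Arguments. Unset Strict Implicit. Unset Printing Implicit Defensive.
Import Order.TTheory GRing.Theory Num.Theory.
Import numFieldTopology.Exports numFieldNormedType.Exports.
Local Open Scope classical_set_scope.
Local Open Scope ring_scope.

Module T1.
Section Tree.
Variables (R : realType) (Pl Info Act : finType).
Notation tree := (tree R Pl Info Act).
Notation label := (label R Info Act).

Lemma childE (b : Act) (t : tree) cs a :
  child ((b, t) :: cs) a = if b == a then Some t else child cs a.
Proof. by rewrite /child /=; case: (b == a). Qed.

Lemma child_mem (cs : seq (Act * tree)) a t : child cs a = Some t -> Stdlib.Lists.List.In (a, t) cs.
Proof.
elim: cs => [|[b t'] cs IH] //=; rewrite childE.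
by case: eqP => [-> [->]|_ /IH]; [left|right].
Qed.

Lemma child_uniq (cs : seq (Act * tree)) a t :
  uniq (map fst cs) -> Stdlib.Lists.List.In (a, t) cs -> child cs a = Some t.
Proof.
elim: cs => [|[b t'] cs IH] //= /andP[nb u]; rewrite childE.
case => [[-> ->]|m]; first by rewrite eqxx.
case: eqP => [eba|_]; last exact: IH.
move: nb; rewrite eba; move/negP; case; elim: cs m {IH u} => [|p cs IH] //= [->|m].
  by rewrite in_cons eqxx.
by rewrite in_cons IH ?orbT.
Qed.

Lemma child_memfst (cs : seq (Act * tree)) a :
  a \in map fst cs -> exists t, child cs a = Some t.
Proof.
elim: cs => [|[b t'] cs IH] //=; rewrite childE.
case: (eqVneq b a) => [->|nb]; first by exists t'.
by rewrite in_cons eq_sym (negbTE nb) /=; exact: IH.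
Qed.

Lemma child_fst (cs : seq (Act * tree)) a t :
  child cs a = Some t -> a \in map fst cs.
Proof.
move/child_mem; elim: cs => [|p cs IH] //= [->|m]; rewrite in_cons ?eqxx //.
by rewrite IH ?orbT.
Qed.

Lemma nodes_Node l (cs : seq (Act * tree)) :
  nodes (Node l cs) = [::] :: flatten [seq map (cons p.1) (nodes p.2) | p <- cs].
Proof.
rewrite /=; congr cons; elim: cs => [|[a t'] cs IH] //=.
by rewrite IH.
Qed.

Lemma mem_nodes_cons l (cs : seq (Act * tree)) a s :
  (a :: s \in nodes (Node l cs)) = has (fun p : Act * tree => (p.1 == a) && (s \in nodes p.2)) cs.
Proof.
rewrite nodes_Node in_cons /=; elim: cs => [|[b t'] cs IH] //=.
rewrite mem_cat IH; congr (_ || _).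
apply/mapP/idP => [[s' m [-> ->]]|/andP[/eqP -> m]]; first by rewrite eqxx.
by exists s.
Qed.

Lemma nil_nodes (t : tree) : [::] \in nodes t.
Proof. by case: t => [u|l cs] //; rewrite nodes_Node in_cons eqxx. Qed.

Lemma sub_nodes (t : tree) s x : sub t s = Some x -> s \in nodes t.
Proof.
elim: s t => [|a s IH] t /=; first by rewrite nil_nodes.
case: t => [//|l cs]; case ec: (child cs a) => [t'|//] /IH m.
rewrite mem_nodes_cons; move: (child_mem ec); elim: (cs) => [|p cs' IH'] //= [->|mm].
  by rewrite eqxx m.
by rewrite IH' ?orbT.
Qed.

Definition Unode (o : option tree) : Prop :=
  match o with Some (Node _ cs) => uniq (map fst cs) | _ => True end.

Lemma nodes_sub (t : tree) s :
  (forall u, u \in nodes t -> Unode (sub t u)) ->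
  s \in nodes t -> exists x, sub t s = Some x.
Proof.
elim: s t => [|a s IH] t U /=; first by exists t.
case: t U => [u|l cs] U; first by rewrite /= mem_seq1.
rewrite mem_nodes_cons => hh.
have [t' [m ms]] : exists t', Stdlib.Lists.List.In (a, t') cs /\ s \in nodes t'.
  elim: (cs) hh => [|[b t'] cs' IH'] //= /orP[/andP[/eqP -> ms]|/IH' [t'' [m ms]]].
    by exists t'; split => //; left.
  by exists t''; split => //; right.
have u0 := U [::] (nil_nodes _); rewrite /= in u0.
rewrite (child_uniq u0 m); apply: IH ms => v mv.
have: a :: v \in nodes (Node l cs).
  rewrite mem_nodes_cons; elim: (cs) m => [|p cs' IH'] //= [->|mm].
    by rewrite eqxx mv.
  by rewrite IH' ?orbT.
by move/U; rewrite /= (child_uniq u0 m).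
Qed.

Lemma nodes_take (t : tree) s j : s \in nodes t -> take j s \in nodes t.
Proof.
elim: s t j => [|a s IH] t [|j] //=; rewrite ?nil_nodes //.
case: t => [u|l cs]; first by rewrite /= mem_seq1.
rewrite !mem_nodes_cons; elim: (cs) => [|p cs' IH'] //= /orP[/andP[-> ms]|/IH' ->].
  by rewrite IH.
by rewrite orbT.
Qed.

Lemma steps_take (t : tree) s j : steps t (take j s) = take j (steps t s).
Proof.
elim: s t j => [|a s IH] t [|j] //=; first by case: t => //= l cs; case: child.
case: t => [//|l cs]; case: (child cs a) => //= t'; by rewrite IH.
Qed.

Lemma size_steps (t : tree) s x : sub t s = Some x -> size (steps t s) = size s.
Proof.
elim: s t => [|a s IH] t //=; case: t => [//|l cs]; case: (child cs a) => // t' e; by rewrite /= (IH _ e).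
Qed.

Lemma steps_snd (t : tree) s : map snd (steps t s) = take (size (steps t s)) s.
Proof.
elim: s t => [|a s IH] t //=; case: t => [//|l cs]; case: (child cs a) => //= t'.
by rewrite IH.
Qed.

Lemma sub_rcons (t : tree) s l cs a x :
  sub t s = Some (Node l cs) -> child cs a = Some x ->
  sub t (rcons s a) = Some x /\ steps t (rcons s a) = rcons (steps t s) (l, a).
Proof.
elim: s t => [|b s IH] t /=.
  by move=> [->] ->.
case: t => [//|l' cs']; case: (child cs' b) => [t'|//] e ec.
by case: (IH _ e ec) => -> ->.
Qed.

Lemma sub_take_nth (t : tree) s x j (dp : label * Act) (da : Act) :
  sub t s = Some x -> (j < size s)%N ->
  exists cs, sub t (take j s) = Some (Node (nth dp (steps t s) j).1 cs) /\
     (nth dp (steps t s) j).2 = nth da s j /\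
     exists y, child cs (nth da s j) = Some y.
Proof.
elim: s t j => [|a s IH] t j //=; case: t => [//|l cs]; case ec: (child cs a) => [t'|//] e.
case: j => [_|j] /=; first by exists cs; split => //; split => //; exists t'.
by rewrite ec; move=> lt; apply: IH e lt.
Qed.

End Tree.

Section Splits.
Variable R : realType.

Fixpoint splits {X : Type} (st : seq X) : seq (seq X * X * seq X) :=
  match st with
  | [::] => [::]
  | p :: st' => ([::], p, st') :: map (fun q => (p :: q.1.1, q.1.2, q.2)) (splits st')
  end.

Lemma In_map_inv {X Y : Type} (f : X -> Y) (s : seq X) y :
  Stdlib.Lists.List.In y (map f s) -> exists x, Stdlib.Lists.List.In x s /\ y = f x.
Proof.
elim: s => [|x s IH] //= [<-|/IH [x' [m ->]]]; first by exists x; split => //; left.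
by exists x'; split => //; right.
Qed.

Lemma In_map {X Y : Type} (f : X -> Y) (s : seq X) x :
  Stdlib.Lists.List.In x s -> Stdlib.Lists.List.In (f x) (map f s).
Proof. by elim: s => [|x' s IH] //= [->|/IH]; [left|right]. Qed.

Lemma splits_cat {X : Type} (st : seq X) q :
  Stdlib.Lists.List.In q (splits st) -> q.1.1 ++ q.1.2 :: q.2 = st.
Proof.
elim: st q => [|p st IH] q //= [<-//|H]; case: (In_map_inv H) => q' [m ->] /=.
by rewrite IH.
Qed.

Lemma splits_nested {X : Type} (st : seq X) q q' :
  Stdlib.Lists.List.In q (splits st) -> Stdlib.Lists.List.In q' (splits q.2) ->
  Stdlib.Lists.List.In (q.1.1 ++ q.1.2 :: q'.1.1, q'.1.2, q'.2) (splits st).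
Proof.
elim: st q => [|p st IH] q //= [<-|H]; last case: (In_map_inv H) => q1 [m ->]; move=> /= m'.
  by right; apply: (In_map (fun q => (p :: q.1.1, q.1.2, q.2))) m'.
right; have := In_map (fun q => (p :: q.1.1, q.1.2, q.2)) (IH _ m m').
by [].
Qed.

Lemma splits_pre {X : Type} (st : seq X) q q' :
  Stdlib.Lists.List.In q (splits st) -> Stdlib.Lists.List.In q' (splits q.1.1) ->
  Stdlib.Lists.List.In (q'.1.1, q'.1.2, q'.2 ++ q.1.2 :: q.2) (splits st).
Proof.
elim: st q q' => [|p st IH] q q' //= [<-//|H]; case: (In_map_inv H) => q1 [m ->] /= [<-|H2].
  by left; rewrite (splits_cat m).
case: (In_map_inv H2) => q2 [m2 ->] /=; right.
exact: (In_map (fun q => (p :: q.1.1, q.1.2, q.2)) (IH _ _ m m2)).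
Qed.

Lemma In_splits {X : Type} (st : seq X) p :
  Stdlib.Lists.List.In p st -> exists q, Stdlib.Lists.List.In q (splits st) /\ q.1.2 = p.
Proof.
elim: st => [|x st IH] //= [->|/IH [q [m e]]]; first by exists ([::], p, st); split => //; left.
exists (x :: q.1.1, q.1.2, q.2); split => //; right.
exact: (In_map (fun q => (x :: q.1.1, q.1.2, q.2)) m).
Qed.

Lemma splits_In {X : Type} (st : seq X) q :
  Stdlib.Lists.List.In q (splits st) -> Stdlib.Lists.List.In q.1.2 st.
Proof.
move/splits_cat <-; elim: q.1.1 => [|x s IH] /=; by [left|right].
Qed.

Lemma count_split {X : Type} (P : pred X) (st : seq X) :
  (0 < count P st)%N -> exists q, Stdlib.Lists.List.In q (splits st) /\ P q.1.2.
Proof.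
elim: st => [|x st IH] //=; case Px: (P x) => /= h.
  by exists ([::], x, st); split => //; left.
have [q [m Pq]] := IH h; exists (x :: q.1.1, q.1.2, q.2); split => //; right.
exact: (In_map (fun q => (x :: q.1.1, q.1.2, q.2)) m).
Qed.

Lemma count_split2 {X : Type} (P : pred X) (st : seq X) :
  (1 < count P st)%N -> exists q, Stdlib.Lists.List.In q (splits st) /\ P q.1.2 /\ (0 < count P q.2)%N.
Proof.
elim: st => [|x st IH] //=; case Px: (P x) => /= h.
  by exists ([::], x, st); split; [left|split].
have [q [m Pq]] := IH h; exists (x :: q.1.1, q.1.2, q.2); split => //; right.
exact: (In_map (fun q => (x :: q.1.1, q.1.2, q.2)) m).
Qed.

Lemma sum_In {X : Type} (s : seq X) (F G : X -> R) :
  (forall q, Stdlib.Lists.List.In q s -> F q = G q) -> \sum_(q <- s) F q = \sum_(q <- s) G q.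
Proof.
elim: s => [|x s IH] h; rewrite ?big_nil ?big_cons //.
by rewrite h ?IH //; [move=> q m; apply: h; right|left].
Qed.

Lemma prod_In {X : Type} (s : seq X) (F G : X -> R) :
  (forall q, Stdlib.Lists.List.In q s -> F q = G q) -> \prod_(q <- s) F q = \prod_(q <- s) G q.
Proof.
elim: s => [|x s IH] h; rewrite ?big_nil ?big_cons //.
by rewrite h ?IH //; [move=> q m; apply: h; right|left].
Qed.

Lemma ler_sum_In {X : Type} (s : seq X) (F G : X -> R) :
  (forall q, Stdlib.Lists.List.In q s -> F q <= G q) -> \sum_(q <- s) F q <= \sum_(q <- s) G q.
Proof.
elim: s => [|x s IH] h; rewrite ?big_nil ?big_cons //.
by rewrite lerD ?IH //; [apply: h; left|move=> q m; apply: h; right].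
Qed.

Lemma sum_ge0_In {X : Type} (s : seq X) (F : X -> R) :
  (forall q, Stdlib.Lists.List.In q s -> 0 <= F q) -> 0 <= \sum_(q <- s) F q.
Proof.
elim: s => [|x s IH] h; rewrite ?big_nil ?big_cons //.
by rewrite addr_ge0 ?IH //; [apply: h; left|move=> q m; apply: h; right].
Qed.

Lemma prod_ge0_In {X : Type} (s : seq X) (F : X -> R) :
  (forall q, Stdlib.Lists.List.In q s -> 0 <= F q) -> 0 <= \prod_(q <- s) F q.
Proof.
elim: s => [|x s IH] h; rewrite ?big_nil ?big_cons //.
by rewrite mulr_ge0 ?IH //; [apply: h; left|move=> q m; apply: h; right].
Qed.

Lemma prod_gt0_In {X : Type} (s : seq X) (F : X -> R) :
  (forall q, Stdlib.Lists.List.In q s -> 0 < F q) -> 0 < \prod_(q <- s) F q.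
Proof.
elim: s => [|x s IH] h; rewrite ?big_nil ?big_cons //.
by rewrite mulr_gt0 ?IH //; [apply: h; left|move=> q m; apply: h; right].
Qed.

Lemma telescope {X : Type} (f g : X -> R) (st : seq X) :
  \prod_(p <- st) f p - \prod_(p <- st) g p =
  \sum_(q <- splits st) (\prod_(p <- q.1.1) f p) * (f q.1.2 - g q.1.2) * \prod_(p <- q.2) g p.
Proof.
elim: st => [|x st IH]; first by rewrite !big_nil subrr.
rewrite /= big_cons !big_cons big_map big_nil mul1r.
have -> : f x * \prod_(p <- st) f p - g x * \prod_(p <- st) g p =
   (f x - g x) * \prod_(p <- st) g p + f x * (\prod_(p <- st) f p - \prod_(p <- st) g p).
  by ring.
rewrite IH mulr_sumr; congr (_ + _); apply: eq_bigr => q _.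
by rewrite big_cons !mulrA.
Qed.

End Splits.

Section TreeSplits.
Variables (R : realType) (Pl Info Act : finType).
Notation tree := (tree R Pl Info Act).

Lemma splits_steps (t : tree) s x : sub t s = Some x ->
  forall q, Stdlib.Lists.List.In q (splits (steps t s)) ->
  exists cs, sub t (take (size q.1.1) s) = Some (Node q.1.2.1 cs) /\
    steps t (take (size q.1.1) s) = q.1.1 /\ q.1.2.2 \in map fst cs.
Proof.
elim: s t => [|a s IH] t //=; case: t => [//|l cs]; case ec: (child cs a) => [t'|//] e q /=.
case => [<-|H]; last case: (In_map_inv H) => q' [m ->]; rewrite /=.
  by exists cs; split => //; split => //; exact: child_fst ec.
have [cs' [e1 [e2 e3]]] := IH _ e _ m.
by exists cs'; rewrite ec e1 e2; split => //; split.
Qed.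

End TreeSplits.

End T1.
Import T1.

Module T2.

Section Game.
Variables (R : realType) (Pl Info Act : finType).
Variable G : game R Pl Info Act.
Notation label := (label R Info Act).
Notation t := (gtree G).
Notation DecJ J := (@Dec R Info Act J).

Definition obsf (p : label * Act) : option (Pl * Info * Act) :=
  if p.1 is Dec J then Some (owner G J, J, p.2) else None.
Lemma obsE h : obs G h = pmap obsf (steps t h). Proof. by []. Qed.
Definition isD (J : Info) (p : label * Act) : bool :=
  if p.1 is Dec K then K == J else false.
Definition ownst (i : Pl) (p : label * Act) : bool :=
  if p.1 is Dec K then owner G K == i else false.
Definition stepOK (p : label * Act) : bool :=
  match p.1 with Dec J => p.2 \in acts G J | Chance f => 0 <= f p.2 end.

Lemma isD_Dec J (p : label * Act) : isD J p -> p.1 = DecJ J.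
Proof. by case: p => [[f|K] b] //= /eqP ->. Qed.

Lemma count_isD J st :
  count (isD J) st = count (pred1 J) (map (fun q => q.1.2) (pmap obsf st)).
Proof.
elim: st => [|[[f|K] b] st IH] //=; by rewrite IH.
Qed.

Lemma size_obs_i i h : size (obs_i G i h) = count (ownst i) (steps t h).
Proof.
rewrite /obs_i obsE size_filter; elim: (steps t h) => [|[[f|K] b] st IH] //=.
by rewrite IH.
Qed.

Lemma not_uniq_count (T : eqType) (s : seq T) :
  ~~ uniq s -> exists x, (1 < count (pred1 x) s)%N.
Proof.
elim: s => [|x s IH] //=; rewrite negb_and negbK; case/orP => [xs|/IH [y c]].
  by exists x; rewrite /= eqxx add1n ltnS -has_count has_pred1.
by exists y; apply: leq_trans c _; rewrite leq_addl.
Qed.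

Hypothesis wf : wf_game G.

Lemma Nodes_sub h : h \in Nodes G -> exists x, sub t h = Some x.
Proof.
apply: nodes_sub => u mu; have := (proj2 wf) u mu.
by case: (sub t u) => [[v|l cs]|] //= [].
Qed.

Lemma node_split h q : h \in Nodes G -> Stdlib.Lists.List.In q (splits (steps t h)) ->
  [/\ take (size q.1.1) h \in Nodes G, steps t (take (size q.1.1) h) = q.1.1 &
     exists cs, sub t (take (size q.1.1) h) = Some (Node q.1.2.1 cs) /\ q.1.2.2 \in map fst cs].
Proof.
move=> mh mq; have [x e] := Nodes_sub mh.
have [cs [e1 [e2 e3]]] := splits_steps e mq.
split => //; last by exists cs.
exact: nodes_take.
Qed.

Lemma split_OK h q : h \in Nodes G -> Stdlib.Lists.List.In q (splits (steps t h)) ->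
  stepOK q.1.2 /\ forall J, q.1.2.1 = DecJ J -> inI G J (take (size q.1.1) h).
Proof.
move=> mh mq; have [m1 _ [cs [e1 e2]]] := node_split mh mq.
have := (proj2 wf) _ m1; rewrite e1 => -[_].
rewrite /stepOK /inI e1; case: q.1.2.1 => [f [hn _]|K eK]; split => //.
- exact: hn.
- by rewrite -eK.
- by move=> J [<-]; rewrite eqxx.
Qed.

Lemma steps_OK h p : h \in Nodes G -> Stdlib.Lists.List.In p (steps t h) -> stepOK p.
Proof.
move=> mh mp; have [q [mq <-]] := In_splits mp; exact: (split_OK mh mq).1.
Qed.

Lemma noAM_uniq : ~ absentminded G -> forall h, h \in Nodes G ->
  uniq [seq q.1.2 | q <- obs G h].
Proof.
move=> nAM h mh; case: (boolP (uniq _)) => // nu; exfalso; apply: nAM; by exists h.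
Qed.

Lemma noAM_count : ~ absentminded G -> forall h J, h \in Nodes G ->
  (count (isD J) (steps t h) <= 1)%N.
Proof.
move=> nAM h J mh; rewrite count_isD -obsE count_uniq_mem ?noAM_uniq //.
by case: (_ \in _).
Qed.

Lemma noAM_first : ~ absentminded G -> forall h J, h \in Nodes G -> inI G J h ->
  count (isD J) (steps t h) = 0%N.
Proof.
move=> nAM h J mh; rewrite /inI; case eh: (sub t h) => [[u|[f|K] cs]|] //= /eqP eK.
subst K.
have [a aA] : exists a, a \in acts G J.
  by have := (proj1 wf) J; rewrite card_gt0 => /set0Pn.
have := (proj2 wf) _ mh; rewrite eh => -[_ /= hc].
have [y ey] := child_memfst (etrans (hc a) aA).
have [e1 e2] := sub_rcons eh ey.
have := noAM_count nAM J (sub_nodes e1); rewrite e2 -cats1 count_cat /= /isD /= eqxx addn0 addn1.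
by rewrite ltnS leqn0 => /eqP.
Qed.

Lemma firstIn_inI : ~ absentminded G -> forall h J, h \in Nodes G ->
  firstIn G J h = inI G J h.
Proof.
move=> nAM h J mh; rewrite /firstIn; case iJ: (inI G J h) => //=.
have := noAM_first nAM mh iJ; rewrite count_isD -obsE => /eqP.
by rewrite -leqn0 leqNgt -has_count has_pred1.
Qed.

Lemma PR_noAM : perfect_recall G -> ~ absentminded G.
Proof.
move=> PR [h [mh nu]].
have [J c] := not_uniq_count nu.
rewrite obsE -count_isD in c.
have [q [mq [dq cq]]] := count_split2 c.
have [q' [mq' dq']] := count_split cq.
have mq'' := splits_nested mq mq'.
have [m1 e1 _] := node_split mh mq.
have [m2 e2 _] := node_split mh mq''.
have i1 := (split_OK mh mq).2 J (isD_Dec dq).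
have i2 := (split_OK mh mq'').2 J (isD_Dec dq').
have := PR J _ _ m1 m2 i1 i2 => /(congr1 size); rewrite !size_obs_i e1 e2 /=.
rewrite count_cat /= /ownst (isD_Dec dq) eqxx => /eqP.
by rewrite -{1}(addn0 (count _ _)) eqn_add2l.
Qed.

End Game.

End T2.
Import T2.

Module T3.

Section Part2.
Variables (R : realType) (Pl Info Act : finType).
Variable G : game R Pl Info Act.
Notation label := (label R Info Act).
Notation t := (gtree G).
Notation DecJ J := (@Dec R Info Act J).

Definition prodpoly (p : Info -> Act -> R) (I : Info) (a : Act) (st : seq (label * Act)) : {poly R} :=
  \prod_(q <- st)
       (if q.1 is Dec J then
          (if (J == I) && (q.2 == a) then 'X else (p J q.2)%:P)
        else (Defs.factor p q.1 q.2)%:P).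

Lemma prodpoly_noI (p : Info -> Act -> R) (I : Info) (a : Act) (st : seq (label * Act)) : count (isD I) st = 0%N ->
  prodpoly p I a st = (\prod_(q <- st) Defs.factor p q.1 q.2)%:P.
Proof.
rewrite /prodpoly; elim: st => [|[[f|K] b] st IH]; rewrite ?big_nil ?big_cons //=.
  by move=> h; rewrite IH // polyCM.
case: (eqVneq K I) => [->|ne]; first by rewrite /isD /= eqxx.
rewrite /isD /= (negbTE ne) /= => h; by rewrite IH // polyCM.
Qed.

Lemma prod_dev_noI (p : Info -> Act -> R) (I : Info) (s : Act -> R) (st : seq (label * Act)) : count (isD I) st = 0%N ->
  \prod_(q <- st) Defs.factor (deviate p I s) q.1 q.2 = \prod_(q <- st) Defs.factor p q.1 q.2.
Proof.
elim: st => [|[[f|K] b] st IH]; rewrite ?big_nil ?big_cons //=.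
  by move=> h; rewrite IH.
rewrite /deviate; case: (eqVneq K I) => [->|ne]; first by rewrite /isD /= eqxx.
rewrite /isD /= (negbTE ne) /= => h; by rewrite IH.
Qed.

Lemma prodpoly_cons p I a q st : prodpoly p I a (q :: st) =
  (if q.1 is Dec J then
          (if (J == I) && (q.2 == a) then 'X else (p J q.2)%:P)
        else (Defs.factor p q.1 q.2)%:P) * prodpoly p I a st.
Proof. by rewrite /prodpoly big_cons. Qed.

Lemma sum_delta (A : {set Act}) (F : Act -> R) b : b \in A ->
  \sum_(a in A) (if b == a then F a else 0) = F b.
Proof.
move=> bA; rewrite (bigD1 b) //= eqxx big1 ?addr0 // => a /andP[_ ne].
by rewrite eq_sym (negbTE ne).
Qed.

Lemma lin_leaf (p : Info -> Act -> R) I (s : Act -> R) st :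
  (count (isD I) st <= 1)%N ->
  (forall q, Stdlib.Lists.List.In q st -> isD I q -> q.2 \in acts G I) ->
  \prod_(q <- st) Defs.factor (deviate p I s) q.1 q.2 - \prod_(q <- st) Defs.factor p q.1 q.2 =
  \sum_(a in acts G I) (s a - p I a) * ((prodpoly p I a st)^`()).[p I a].
Proof.
elim: st => [|q st IH] c hA.
  by rewrite !big_nil subrr /prodpoly big1 // => a _; rewrite big_nil derivC horner0 mulr0.
case dq: (isD I q).
- move: c; rewrite /= dq add1n ltnS leqn0 => /eqP c0.
  have bA : q.2 \in acts G I by apply: hA => //; left.
  rewrite !big_cons prod_dev_noI // (isD_Dec dq) /= /deviate eqxx.
  rewrite (eq_bigr (fun a => if q.2 == a then (s a - p I a) * \prod_(q <- st) Defs.factor p q.1 q.2 else 0)); last first.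
    move=> a _; rewrite prodpoly_cons (isD_Dec dq) /= eqxx /= prodpoly_noI //.
    case: eqP => _; rewrite derivM ?derivX ?derivC.
      by rewrite mulr0 addr0 mul1r hornerC.
    by rewrite mul0r mulr0 addr0 horner0 mulr0.
  by rewrite sum_delta // mulrBl.
- have fe : Defs.factor (deviate p I s) q.1 q.2 = Defs.factor p q.1 q.2.
    by move: dq; rewrite /isD /deviate; case: q.1 => [f|K] //= /negbT/negbTE ->.
  have pe : forall a, (if q.1 is Dec J then
          (if (J == I) && (q.2 == a) then 'X else (p J q.2)%:P)
        else (Defs.factor p q.1 q.2)%:P) = (Defs.factor p q.1 q.2)%:P.
    by move: dq; rewrite /isD; case: q.1 => [f|K] //= /negbT/negbTE ->.
  rewrite !big_cons fe -mulrBr IH; last first.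
  + by move=> q' m; apply: hA; right.
  + by move: c; rewrite /= dq.
  rewrite mulr_sumr; apply: eq_bigr => a _.
  rewrite prodpoly_cons pe deriv_mulC hornerCM.
  by rewrite mulrCA.
Qed.

Hypothesis wf : wf_game G.
Hypothesis nAM : ~ absentminded G.

Lemma EU_dev i p I (s : Act -> R) :
  EU G i (deviate p I s) = EU G i p + \sum_(a in acts G I) (s a - p I a) * pdU G i p I a.
Proof.
rewrite -[LHS](subrK (EU G i p)) addrC; congr (_ + _).
rewrite /EU -sumrB.
rewrite [RHS](eq_bigr (fun a => (s a - p I a) * \sum_(h <- Nodes G | isLeaf G h)
    ((prodpoly p I a (steps t h))^`()).[p I a] * util G h i)); last first.
  move=> a _; congr (_ * _); rewrite /pdU /Upoly raddf_sum horner_sum; apply: eq_bigr => h _.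
  by rewrite -/(prodpoly p I a _); rewrite /= derivM derivC mulr0 addr0 hornerM hornerC.
under [RHS]eq_bigr => a _ do rewrite mulr_sumr.
rewrite exchange_big /= big_seq_cond [RHS]big_seq_cond; apply: eq_bigr => h /andP[mh _].
rewrite /reach -mulrBl lin_leaf; first by rewrite mulr_suml; apply: eq_bigr => a _; rewrite mulrA.
- exact: noAM_count.
- move=> q mq dq; have := steps_OK wf mh mq; by rewrite /stepOK (isD_Dec dq).
Qed.

Lemma UCDT_EU i s p I : UCDT G i s p I = EU G i (deviate p I s).
Proof. by rewrite EU_dev. Qed.

Lemma PI_Fr p I : PI G p I = Fr G p I.
Proof.
rewrite /PI /Fr big_seq_cond [RHS]big_seq_cond; apply: eq_bigl => h.
by case mh: (h \in Nodes G) => //=; rewrite firstIn_inI.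
Qed.

Definition delta (b : Act) : Act -> R := fun a => (a == b)%:R.

Lemma delta_dist I b : b \in acts G I -> isDist (acts G I) (delta b).
Proof.
move=> bA; split; first by move=> a _; rewrite /delta ler0n.
rewrite (bigD1 b) //= /delta eqxx big1 ?addr0 // => a /andP[_ ne].
by rewrite (negbTE ne).
Qed.

Lemma EDT_CDT_eq pi : valid_profile G pi -> (EDT_eq G pi <-> CDT_eq G pi).
Proof.
move=> vp; split.
- move=> E i.
  exists (fun I => \sum_(a in acts G I) pi I a * pdU G i pi I a).
  exists (fun I a => \sum_(b in acts G I) pi I b * pdU G i pi I b - pdU G i pi I a).
  move=> I a oI aA.
  have le : forall b, b \in acts G I ->
      pdU G i pi I b <= \sum_(c in acts G I) pi I c * pdU G i pi I c.
    move=> b bA; have := E I _ (delta_dist bA); rewrite oI EU_dev -{2}[EU G i pi]addr0 lerD2l.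
    under eq_bigr => c _ do rewrite mulrBl.
    rewrite sumrB subr_le0.
    rewrite (eq_bigr (fun c => if b == c then pdU G i pi I c else 0)).
      by rewrite sum_delta.
    by move=> c _; rewrite /delta eq_sym; case: eqP; rewrite ?mul1r ?mul0r.
  have ge : forall b, b \in acts G I ->
      0 <= pi I b * (\sum_(c in acts G I) pi I c * pdU G i pi I c - pdU G i pi I b).
    by move=> b bA; rewrite mulr_ge0 ?subr_ge0 ?le //; apply: (proj1 (vp I)).
  split.
  + by rewrite subr_ge0 le.
  + rewrite mulrC; apply: (psumr_eq0P ge) => //.
    under eq_bigr => c _ do rewrite mulrBr.
    by rewrite sumrB -mulr_suml (proj2 (vp I)) mul1r subrr.
  + by rewrite addrC subrK.
- move=> C I s sd; rewrite EU_dev -{2}[EU G _ pi]addr0 lerD2l.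
  have [lam [mu h]] := C (owner G I).
  rewrite (eq_bigr (fun a => s a * lam I - pi I a * lam I - s a * mu I a + pi I a * mu I a)); last first.
    move=> a aA; have [_ _ e] := h I a erefl aA.
    have -> : pdU G (owner G I) pi I a = lam I - mu I a by rewrite -e addrK.
    ring.
  rewrite big_split /= !sumrB -!mulr_suml (proj2 sd) (proj2 (vp I)) subrr sub0r.
  rewrite [X in _ + X]big1 ?addr0; last by move=> a aA; have [_ e _] := h I a erefl aA; rewrite mulrC.
  rewrite oppr_le0 sumr_ge0 // => a aA; have [m _ _] := h I a erefl aA.
  by rewrite mulr_ge0 //; apply: (proj1 sd).
Qed.

Lemma EDT_CDT_rational i pi y : EDT_rational G i pi y <-> CDT_rational G i pi y.
Proof.
split => -[x [eps [ap h]]]; exists x, eps; split => // k I s oI.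
- rewrite -PI_Fr UCDT_EU; exact: h.
- rewrite PI_Fr -UCDT_EU; exact: h.
Qed.

Lemma part2 pi : valid_profile G pi -> (EDT_Nash G pi <-> CDT_Nash G pi).
Proof.
move=> vp; split => -[e h]; split; try by apply/EDT_CDT_eq.
- move=> i; have [y [v r q]] := h i; exists y; split => //; exact/EDT_CDT_rational.
- move=> i; have [y [v r q]] := h i; exists y; split => //; exact/EDT_CDT_rational.
Qed.

End Part2.

End T3.
Import T3.

Module T4.

Section Part3.
Variables (R : realType) (Pl Info Act : finType).
Variable G : game R Pl Info Act.
Notation label := (label R Info Act).
Notation t := (gtree G).
Notation DecJ J := (@Dec R Info Act J).
Variable i : Pl.
Variable pi : Info -> Act -> R.

Definition ownf (x : Info -> Act -> R) (p : label * Act) : R :=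
  if p.1 is Dec K then (if owner G K == i then x K p.2 else 1) else 1.
Definition othf (p : label * Act) : R :=
  if p.1 is Dec K then (if owner G K == i then 1 else pi K p.2) else Defs.factor pi p.1 p.2.
Definition own x (st : seq (label * Act)) := \prod_(p <- st) ownf x p.
Definition oth (st : seq (label * Act)) := \prod_(p <- st) othf p.
Definition fr x (p : label * Act) := Defs.factor (replace G i x pi) p.1 p.2.

Lemma fr_split x p : fr x p = ownf x p * othf p.
Proof.
rewrite /fr /ownf /othf /replace; case: p => [[f|K] b] /=; rewrite ?mul1r //.
by case: (owner G K == i); rewrite ?mulr1 ?mul1r.
Qed.

Lemma prod_fr x st : \prod_(p <- st) fr x p = own x st * oth st.
Proof. by rewrite /own /oth -big_split /=; apply: eq_bigr => p _; rewrite fr_split. Qed.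

Lemma reach_fr x h : reach G (replace G i x pi) h = \prod_(p <- steps t h) fr x p.
Proof. by []. Qed.

Lemma own_obs x st :
  own x st = \prod_(q <- [seq q <- pmap (obsf G) st | q.1.1 == i]) x q.1.2 q.2.
Proof.
rewrite /own; elim: st => [|[[f|K] b] st IH]; rewrite ?big_nil ?big_cons //= ?mul1r //.
rewrite /ownf /=; case: (owner G K == i); rewrite ?big_cons ?mul1r IH //.
Qed.

Definition rep (J : Info) : seq Act := nth [::] (Nodes G) (find (inI G J) (Nodes G)).

Lemma rep_Nodes J : rep J \in Nodes G.
Proof.
rewrite /rep; case: (ltnP (find (inI G J) (Nodes G)) (size (Nodes G))) => h.
  exact: mem_nth.
by rewrite nth_default // nil_nodes.
Qed.

Lemma rep_inI J h : h \in Nodes G -> inI G J h -> inI G J (rep J).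
Proof.
move=> mh iJ; rewrite /rep; apply: nth_find; apply/hasP; by exists h.
Qed.

Definition cc x J := own x (steps t (rep J)).

Hypothesis PR : perfect_recall G.

Lemma own_rep x J h : h \in Nodes G -> inI G J h -> owner G J = i ->
  own x (steps t h) = cc x J.
Proof.
move=> mh iJ oJ; rewrite /cc !own_obs.
have := PR (rep_Nodes J) mh (rep_inI mh iJ) iJ; rewrite oJ /obs_i !obsE => ->.
by [].
Qed.

Definition S (J : Info) := \sum_(h <- Nodes G | inI G J h) oth (steps t h).

Definition E x J a := \sum_(h <- Nodes G | isLeaf G h) util G h i *
  \sum_(q <- splits (steps t h))
     (if isD J q.1.2 && (q.1.2.2 == a) then oth q.1.1 * \prod_(p <- q.2) fr x p else 0).

Definition D x J (s : Act -> R) := \sum_(a in acts G J) (s a - x J a) * E x J a.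

Hypothesis wf : wf_game G.

Lemma K2_term z x h q : h \in Nodes G -> Stdlib.Lists.List.In q (splits (steps t h)) ->
  (\prod_(p <- q.1.1) fr z p) * (fr z q.1.2 - fr x q.1.2) * \prod_(p <- q.2) fr x p =
  \sum_(J | owner G J == i) \sum_(a in acts G J) cc z J * ((z J a - x J a) *
     (if isD J q.1.2 && (q.1.2.2 == a) then oth q.1.1 * \prod_(p <- q.2) fr x p else 0)).
Proof.
move=> mh mq; have [m1 e1 _] := node_split wf mh mq.
have [okq iq] := split_OK wf mh mq.
move: okq iq; case: q mq m1 e1 => [[pre [l b]] post] /= mq m1 e1.
case: l mq => [f|K] mq okq iq.
- have -> : fr z (Chance Info f, b) = fr x (Chance Info f, b) by [].
  rewrite subrr mulr0 mul0r big1 // => J _; rewrite big1 // => a _.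
  by rewrite /isD /= !mulr0.
- have iK := iq K erefl.
  case oK: (owner G K == i).
  + rewrite (bigD1 K) //= [X in _ = _ + X]big1 ?addr0; last first.
      move=> J /andP[_ ne]; rewrite big1 // => a _.
      by rewrite /isD /= eq_sym (negbTE ne) /= !mulr0.
    rewrite (eq_bigr (fun a => if b == a then cc z K * ((z K a - x K a) * (oth pre * \prod_(p <- post) fr x p)) else 0)); last first.
      by move=> a _; rewrite /isD /= eqxx /=; case: (b == a); rewrite ?mulr0.
    rewrite sum_delta //.
    have -> : \prod_(p <- pre) fr z p = cc z K * oth pre.
      by rewrite prod_fr -(own_rep z m1 iK (eqP oK)) e1.
    rewrite /fr /replace /= oK; ring.
  + rewrite /fr /replace /= oK subrr mulr0 mul0r big1 // => J oJ; rewrite big1 // => a _.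
    rewrite /isD /=; case: eqP => [eK|_]; last by rewrite /= !mulr0.
    by move: oJ; rewrite -eK oK.
Qed.


Lemma factor_ext (p p' : Info -> Act -> R) l a : (forall K b, p K b = p' K b) ->
  Defs.factor p l a = Defs.factor p' l a.
Proof. by case: l => [f|K] //= e; apply: e. Qed.

Lemma reach_ext (p p' : Info -> Act -> R) h : (forall K b, p K b = p' K b) ->
  reach G p h = reach G p' h.
Proof. by move=> e; apply: eq_bigr => q _; apply: factor_ext. Qed.

Lemma EU_ext j (p p' : Info -> Act -> R) : (forall K b, p K b = p' K b) ->
  EU G j p = EU G j p'.
Proof. by move=> e; apply: eq_bigr => h _; rewrite (reach_ext _ e). Qed.

Lemma PI_ext (p p' : Info -> Act -> R) J : (forall K b, p K b = p' K b) ->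
  PI G p J = PI G p' J.
Proof. by move=> e; apply: eq_bigr => h _; rewrite (reach_ext _ e). Qed.

Lemma K2 z x : EU G i (replace G i z pi) - EU G i (replace G i x pi) =
  \sum_(J | owner G J == i) cc z J * D x J (z J).
Proof.
rewrite /EU -sumrB.
transitivity (\sum_(h <- Nodes G | isLeaf G h) \sum_(J | owner G J == i) \sum_(a in acts G J)
   \sum_(q <- splits (steps t h)) util G h i * (cc z J * ((z J a - x J a) *
     (if isD J q.1.2 && (q.1.2.2 == a) then oth q.1.1 * \prod_(p <- q.2) fr x p else 0)))).
  rewrite big_seq_cond [RHS]big_seq_cond; apply: eq_bigr => h /andP[mh _].
  rewrite -mulrBl !reach_fr telescope mulrC mulr_sumr.
  rewrite (sum_In (G := fun q => \sum_(J | owner G J == i) \sum_(a in acts G J) util G h i * (cc z J * ((z J a - x J a) *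
     (if isD J q.1.2 && (q.1.2.2 == a) then oth q.1.1 * \prod_(p <- q.2) fr x p else 0))))); last first.
    move=> q mq; rewrite (K2_term z x mh mq) mulr_sumr; apply: eq_bigr => J _.
    by rewrite mulr_sumr.
  rewrite exchange_big; apply: eq_bigr => J _; rewrite exchange_big.
  by apply: eq_bigr => a _.
rewrite exchange_big; apply: eq_bigr => J _; rewrite exchange_big /D mulr_sumr.
apply: eq_bigr => a _; rewrite /E !mulr_sumr; apply: eq_bigr => h _.
rewrite !mulr_sumr; apply: eq_bigr => q _; ring.
Qed.

Lemma own_noJ x J s st : count (isD J) st = 0%N -> own (deviate x J s) st = own x st.
Proof.
rewrite /own; elim: st => [|[[f|K] b] st IH]; rewrite ?big_nil ?big_cons //.
  by move=> /= h; rewrite IH.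
rewrite /ownf /deviate /=; case: (eqVneq K J) => [->|ne]; first by rewrite /isD /= eqxx.
by rewrite /isD /= (negbTE ne) /= => h; rewrite IH.
Qed.

Lemma rep_noJ J : count (isD J) (steps t (rep J)) = 0%N.
Proof.
case hJ: (has (inI G J) (Nodes G)).
  have [h mh iJ] := hasP hJ.
  exact: (noAM_first wf (PR_noAM wf PR) (rep_Nodes J) (rep_inI mh iJ)).
rewrite /rep nth_default //; last by rewrite leqNgt -has_find hJ.
Qed.

Lemma K1 x J s : owner G J = i ->
  EU G i (deviate (replace G i x pi) J s) - EU G i (replace G i x pi) = cc x J * D x J s.
Proof.
move=> oJ.
have -> : EU G i (deviate (replace G i x pi) J s) = EU G i (replace G i (deviate x J s) pi).
  apply: EU_ext => K b; rewrite /deviate /replace; case: eqP => [->|//]; by rewrite oJ eqxx.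
rewrite K2 (bigD1 J) ?oJ ?eqxx //= big1 ?addr0; last first.
  move=> K /andP[_ ne]; rewrite /D big1 ?mulr0 // => a _.
  by rewrite /deviate (negbTE ne) subrr mul0r.
by rewrite /cc own_noJ ?rep_noJ // /deviate eqxx.
Qed.

Lemma K3 x J : owner G J = i -> PI G (replace G i x pi) J = cc x J * S J.
Proof.
move=> oJ; rewrite /PI /S mulr_sumr big_seq_cond [RHS]big_seq_cond.
rewrite (eq_bigl (fun h => (h \in Nodes G) && inI G J h)); last first.
  by move=> h; case mh: (h \in Nodes G) => //=; rewrite (firstIn_inI wf (PR_noAM wf PR)).
apply: eq_bigr => h /andP[mh iJ].
by rewrite reach_fr prod_fr (own_rep x mh iJ oJ).
Qed.

Hypothesis vp : valid_profile G pi.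

Lemma othf_ge0 p : stepOK G p -> 0 <= othf p.
Proof.
rewrite /stepOK /othf; case: p => [[f|K] b] //= ok.
by case: (owner G K == i) => //; apply: (proj1 (vp K)).
Qed.

Lemma oth_ge0 h : h \in Nodes G -> 0 <= oth (steps t h).
Proof.
move=> mh; apply: prod_ge0_In => p mp; apply: othf_ge0; exact: (steps_OK wf mh mp).
Qed.

Lemma S_ge0 J : 0 <= S J.
Proof. by rewrite /S big_seq_cond sumr_ge0 // => h /andP[mh _]; apply: oth_ge0. Qed.

Lemma own_ge0 x h : (forall K b, owner G K = i -> b \in acts G K -> 0 <= x K b) ->
  h \in Nodes G -> 0 <= own x (steps t h).
Proof.
move=> hx mh; apply: prod_ge0_In => p mp; have := steps_OK wf mh mp.
rewrite /stepOK /ownf; case: p {mp} => [[f|K] b] //= ok.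
by case: eqP => // e; apply: hx.
Qed.

Lemma own_gt0 x h : (forall K b, owner G K = i -> b \in acts G K -> 0 < x K b) ->
  h \in Nodes G -> 0 < own x (steps t h).
Proof.
move=> hx mh; apply: prod_gt0_In => p mp; have := steps_OK wf mh mp.
rewrite /stepOK /ownf; case: p {mp} => [[f|K] b] //= ok.
by case: eqP => // e; apply: hx.
Qed.

Lemma K4 x J a : S J = 0 -> E x J a = 0.
Proof.
move=> S0; rewrite /E big_seq_cond big1 // => h /andP[mh _].
rewrite (sum_In (G := fun _ => 0)) ?big1 ?mulr0 // => q mq.
case: ifP => // /andP[dq _].
have [m1 e1 _] := node_split wf mh mq.
have iJ := (split_OK wf mh mq).2 J (isD_Dec dq).
have : all (fun h => ((h \in Nodes G) && inI G J h) ==> (oth (steps t h) == 0)) (Nodes G).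
  rewrite -psumr_eq0; first by rewrite -big_seq_cond -/(S J) S0.
  by move=> h' /andP[mh' _]; apply: oth_ge0.
move/allP/(_ _ m1); rewrite m1 iJ e1 /= => /eqP ->; by rewrite mul0r.
Qed.

End Part3.

End T4.
Import T4.

Module T5.

Section Cvg.
Variable R : realType.

Lemma cvg_prod_In {X : Type} (s : seq X) (F : nat -> X -> R) (L : X -> R) :
  (forall q, Stdlib.Lists.List.In q s -> (fun k => F k q) @ \oo --> L q) ->
  (fun k => \prod_(q <- s) F k q) @ \oo --> \prod_(q <- s) L q.
Proof.
elim: s => [|x s IH] h.
  rewrite big_nil; under eq_fun do rewrite big_nil; exact: cvg_cst.
rewrite big_cons; under eq_fun do rewrite big_cons.
apply: cvgM; first by apply: h; left.
by apply: IH => q m; apply: h; right.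
Qed.

Lemma cvg_sum_In {X : Type} (s : seq X) (F : nat -> X -> R) (L : X -> R) :
  (forall q, Stdlib.Lists.List.In q s -> (fun k => F k q) @ \oo --> L q) ->
  (fun k => \sum_(q <- s) F k q) @ \oo --> \sum_(q <- s) L q.
Proof.
elim: s => [|x s IH] h.
  rewrite big_nil; under eq_fun do rewrite big_nil; exact: cvg_cst.
rewrite big_cons; under eq_fun do rewrite big_cons.
apply: cvgD; first by apply: h; left.
by apply: IH => q m; apply: h; right.
Qed.

Lemma cvg_sum_fin {X : finType} (P : pred X) (F : nat -> X -> R) (L : X -> R) :
  (forall q, P q -> (fun k => F k q) @ \oo --> L q) ->
  (fun k => \sum_(q | P q) F k q) @ \oo --> \sum_(q | P q) L q.
Proof.
move=> h; rewrite big_mkcond; under eq_fun do rewrite big_mkcond.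
apply: cvg_sum_In => q _; case: (boolP (P q)) => Pq; first exact: h.
exact: cvg_cst.
Qed.

Lemma cvg_sum_cond {X : eqType} (s : seq X) (P : pred X) (F : nat -> X -> R) (L : X -> R) :
  (forall q, q \in s -> P q -> (fun k => F k q) @ \oo --> L q) ->
  (fun k => \sum_(q <- s | P q) F k q) @ \oo --> \sum_(q <- s | P q) L q.
Proof.
elim: s => [|x s IH] h.
  rewrite big_nil; under eq_fun do rewrite big_nil; exact: cvg_cst.
rewrite big_cons; under eq_fun do rewrite big_cons.
case: (boolP (P x)) => Px.
  apply: cvgD; first by apply: h; rewrite ?in_cons ?eqxx.
  by apply: IH => q m; apply: h; rewrite in_cons m orbT.
by apply: IH => q m; apply: h; rewrite in_cons m orbT.
Qed.

Lemma ge_of_cvg (u : nat -> R) (a b : R) : u @ \oo --> a -> (forall k, b <= u k) -> b <= a.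
Proof.
move=> cu h; rewrite -(cvg_lim _ cu) //; apply: limr_ge; first exact: cvgP cu.
by apply: nearW.
Qed.

End Cvg.

Section PartB.
Variables (R : realType) (Pl Info Act : finType).
Variable G : game R Pl Info Act.
Notation label := (label R Info Act).
Notation t := (gtree G).
Variable i : Pl.
Variable pi : Info -> Act -> R.
Hypothesis PR : perfect_recall G.
Hypothesis wf : wf_game G.
Hypothesis vp : valid_profile G pi.

Lemma cvg_EU (x : nat -> Info -> Act -> R) y :
  (forall I a, owner G I = i -> a \in acts G I -> (fun k => x k I a) @ \oo --> y I a) ->
  (fun k => EU G i (replace G i (x k) pi)) @ \oo --> EU G i (replace G i y pi).
Proof.
move=> cx; rewrite /EU; apply: cvg_sum_cond => h mh _.
apply: cvgM; last exact: cvg_cst.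
rewrite /reach; apply: cvg_prod_In => p mp.
have := steps_OK wf mh mp; rewrite /stepOK /replace.
case: p {mp} => [[f|K] b] /= ok; first exact: cvg_cst.
case: eqP => oK; last exact: cvg_cst.
exact: cx.
Qed.

Lemma partB_player y : valid_strat G i y -> EDT_rational G i pi y ->
  forall z, valid_strat G i z -> EU G i (replace G i z pi) <= EU G i (replace G i y pi).
Proof.
move=> vy [x [eps [[vx px cx ep ceps] hr]]] z vz.
set C := \sum_(J | owner G J == i) cc G i z J * S G i pi J.
have bound : forall k, EU G i (replace G i z pi) <= EU G i (replace G i (x k) pi) + eps k * C.
  move=> k; rewrite -lerBlDl K2 // /C mulr_sumr; apply: ler_sum => J /eqP oJ.
  rewrite mulrCA; apply: ler_wpM2l.
    apply: own_ge0 => //; last exact: rep_Nodes.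
    by move=> K b oK bK; apply: (proj1 (vz K oK)).
  have [S0|Sp] := eqVneq (S G i pi J) 0.
    by rewrite S0 mulr0 /D big1 // => a _; rewrite K4 // mulr0.
  have Sgt : 0 < S G i pi J by rewrite lt0r Sp S_ge0.
  have cgt : 0 < cc G i (x k) J.
    apply: own_gt0 => //; last exact: rep_Nodes.
    by move=> K b oK bK; exact: px.
  have := hr k J (z J) oJ; rewrite K3 // pmulr_rgt0 // => /(_ Sgt (vz J oJ)).
  rewrite K1 // ler_pdivrMr ?mulr_gt0 // mulrCA ler_pM2l //.
apply: (ge_of_cvg _ bound).
rewrite -[X in _ --> X]addr0; apply: cvgD; first exact: cvg_EU.
rewrite -(mul0r C); apply: cvgM => //; exact: cvg_cst.
Qed.

End PartB.

End T5.
Import T5.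

Module T6.

Section PartA.
Variables (R : realType) (Pl Info Act : finType).
Variable G : game R Pl Info Act.
Notation label := (label R Info Act).
Notation t := (gtree G).
Notation DecJ J := (@Dec R Info Act J).
Variable i : Pl.
Variable pi : Info -> Act -> R.
Hypothesis PR : perfect_recall G.
Hypothesis wf : wf_game G.
Hypothesis vp : valid_profile G pi.

Notation cc := (cc G i).
Notation S := (S G i pi).
Notation E := (E G i pi).
Notation D := (D G i pi).
Notation fr := (fr G i pi).
Notation own := (own G i).
Notation oth := (oth G i pi).

Definition rk (J : Info) : nat := count (ownst G i) (steps t (rep G J)).

Lemma rk_node J h : h \in Nodes G -> inI G J h -> owner G J = i ->
  rk J = count (ownst G i) (steps t h).
Proof.
move=> mh iJ oJ; rewrite /rk -!size_obs_i.
have := PR (rep_Nodes G J) mh (rep_inI mh iJ) iJ; rewrite oJ => ->.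
by [].
Qed.

Lemma rk_post h q q' J b K b' : h \in Nodes G ->
  Stdlib.Lists.List.In q (splits (steps t h)) -> q.1.2 = (DecJ J, b) -> owner G J = i ->
  Stdlib.Lists.List.In q' (splits q.2) -> q'.1.2 = (DecJ K, b') -> owner G K = i ->
  (rk J < rk K)%N.
Proof.
move=> mh mq eq oJ mq' eq' oK.
have mq'' := splits_nested mq mq'.
have [m1 e1 _] := node_split wf mh mq.
have [m2 e2 _] := node_split wf mh mq''.
have i1 := (split_OK wf mh mq).2 J (congr1 fst eq).
have i2 := (split_OK wf mh mq'').2 K (congr1 fst eq').
rewrite (rk_node m1 i1 oJ) (rk_node m2 i2 oK) e1 e2 /= count_cat /= eq /ownst /= oJ eqxx.
by rewrite add1n -addSnnS leq_addr.
Qed.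

Lemma rk_pre h q q' J b K b' : h \in Nodes G ->
  Stdlib.Lists.List.In q (splits (steps t h)) -> q.1.2 = (DecJ J, b) -> owner G J = i ->
  Stdlib.Lists.List.In q' (splits q.1.1) -> q'.1.2 = (DecJ K, b') -> owner G K = i ->
  (rk K < rk J)%N.
Proof.
move=> mh mq eq oJ mq' eq' oK.
have mq'' := splits_pre mq mq'.
have [m1 e1 _] := node_split wf mh mq.
have [m2 e2 _] := node_split wf mh mq''.
have i1 := (split_OK wf mh mq).2 J (congr1 fst eq).
have i2 := (split_OK wf mh mq'').2 K (congr1 fst eq').
rewrite (rk_node m1 i1 oJ) (rk_node m2 i2 oK) e1 e2 /= -(splits_cat mq') count_cat /= eq'.
by rewrite /ownst /= oK eqxx add1n -addSnnS leq_addr.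
Qed.

Lemma E_local x x' J a : owner G J = i ->
  (forall K b, owner G K = i -> (rk J < rk K)%N -> x K b = x' K b) ->
  E x J a = E x' J a.
Proof.
move=> oJ hx; rewrite /E big_seq_cond [RHS]big_seq_cond; apply: eq_bigr => h /andP[mh _].
congr (_ * _); apply: sum_In => q mq; case: ifP => // /andP[dq _].
congr (_ * _); apply: prod_In => p mp.
have [q' [mq' eq']] := In_splits mp.
rewrite /T4.fr /replace; case ep: p => [[f|K] b] //=.
case: eqP => // oK; apply: hx => //.
have e1 : q.1.2 = (DecJ J, q.1.2.2) by rewrite -(isD_Dec dq); case: q.1.2.
apply: (rk_post mh mq e1 oJ mq' _ oK); by rewrite eq' ep.
Qed.

Lemma own_local x x' st :
  (forall q, Stdlib.Lists.List.In q (splits st) -> forall K b, q.1.2 = (DecJ K, b) ->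
     owner G K = i -> x K b = x' K b) ->
  own x st = own x' st.
Proof.
move=> h; rewrite /T4.own; apply: prod_In => p mp.
have [q [mq eq]] := In_splits mp.
rewrite /ownf; case ep: p => [[f|K] b] //=; case: eqP => // oK.
by apply: (h q mq _ _ _ oK); rewrite eq ep.
Qed.

Definition real_eq (y : Info -> Act -> R) :=
  forall h, h \in Nodes G -> reach G (replace G i y pi) h = reach G pi h.

Lemma reach_pi h : reach G pi h = reach G (replace G i pi pi) h.
Proof. by apply: reach_ext => K b; rewrite /replace; case: ifP. Qed.

Lemma cc_eq y K : real_eq y -> owner G K = i -> 0 < S K -> cc y K = cc pi K.
Proof.
move=> re oK Sp.
have : has (fun h => ((h \in Nodes G) && inI G K h) && (0 < oth (steps t h))) (Nodes G).
  rewrite -psumr_neq0; first by rewrite -big_seq_cond -/(T4.S G i pi K) lt0r_neq0.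
  by move=> h /andP[mh _]; apply: oth_ge0.
case/hasP => h _ /andP[/andP[mh iK] op].
have := re h mh; rewrite reach_pi !reach_fr !prod_fr.
rewrite (own_rep PR y mh iK oK) (own_rep PR pi mh iK oK) => /(mulIf (lt0r_neq0 op)).
by [].
Qed.

Lemma real_eq_mod y y' (M : pred Info) r :
  real_eq y ->
  (forall K, M K -> [/\ owner G K = i, rk K = r, 0 < S K & cc pi K = 0]) ->
  (forall K, ~~ M K -> y' K = y K) ->
  real_eq y'.
Proof.
move=> re hM hy h mh; rewrite -(re h mh); apply/eqP; rewrite -subr_eq0; apply/eqP.
rewrite !reach_fr telescope (sum_In (G := fun _ => 0)) ?big1 // => q mq.
have [m1 e1 _] := node_split wf mh mq.
case eq: q.1.2 => [[f|K] b].
  by rewrite /T4.fr /= subrr mulr0 mul0r.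
case: (boolP (M K)) => MK; last first.
  by rewrite /T4.fr /replace /= (hy K MK) subrr mulr0 mul0r.
have [oK rK Sp c0] := hM K MK.
have iK := (split_OK wf mh mq).2 K (congr1 fst eq).
have -> : \prod_(p <- q.1.1) fr y' p = 0.
  rewrite prod_fr (own_local (x' := y)); last first.
    move=> q' mq' K' b' eq' oK'; rewrite (hy K') //; apply/negP => MK'.
    have [_ rK' _ _] := hM K' MK'.
    have := rk_pre mh mq eq oK mq' eq' oK'; by rewrite rK' rK ltnn.
  by rewrite -e1 (own_rep PR y m1 iK oK) (cc_eq re oK Sp) c0 mul0r.
by rewrite !mul0r.
Qed.

Definition br y (K : Info) : Act -> R :=
  match [pick a in acts G K] with
  | Some a0 => delta R (Order.arg_max a0 (fun a => a \in acts G K) (E y K))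
  | None => fun _ => 0
  end.

Lemma best_response y : exists d : Info -> Act -> R, forall K, isDist (acts G K) (d K) /\
  forall s, isDist (acts G K) s -> \sum_(a in acts G K) (s a - d K a) * E y K a <= 0.
Proof.
exists (br y) => K; rewrite /br; case: pickP => [a0 a0A|none]; last first.
  by exfalso; have := (proj1 wf) K; rewrite card_gt0 => /set0Pn [a aA]; move: (none a); rewrite aA.
case: (@arg_maxP _ _ _ a0 (fun a => a \in acts G K) (E y K) a0A) => a aA amax.
split; first exact: delta_dist.
move=> s [s0 s1].
under eq_bigr => b _ do rewrite mulrBl.
rewrite sumrB.
rewrite [X in _ - X](eq_bigr (fun b => if a == b then E y K b else 0)); last first.
  by move=> b _; rewrite /delta eq_sym; case: eqP; rewrite ?mul1r ?mul0r.
rewrite sum_delta // subr_le0.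
apply: (@le_trans _ _ (\sum_(b in acts G K) s b * E y K a)).
  apply: ler_sum => b bA; apply: ler_wpM2l; first exact: s0.
  exact: amax.
by rewrite -mulr_suml s1 mul1r.
Qed.

Definition Qr r := exists y, [/\ valid_strat G i y, real_eq y &
   forall J, owner G J = i -> (r <= rk J)%N -> 0 < S J -> cc pi J = 0 ->
     forall s, isDist (acts G J) s -> D y J s <= 0].

Lemma Qr_step r : Qr r.+1 -> Qr r.
Proof.
move=> [y [vy re hy]].
have [d hd] := best_response y.
pose M := fun K => [&& owner G K == i, rk K == r, 0 < S K & cc pi K == 0].
pose y' := fun K => if M K then d K else y K.
have hM : forall K, M K -> [/\ owner G K = i, rk K = r, 0 < S K & cc pi K = 0].
  by move=> K /and4P[/eqP ? /eqP ? ? /eqP ?].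
have Eloc : forall J a, owner G J = i -> (r <= rk J)%N -> E y' J a = E y J a.
  move=> J a oJ rJ; apply: E_local => // K b oK lt.
  rewrite /y'; case: ifP => // MK; have [_ rK _ _] := hM K MK.
  by move: lt; rewrite rK ltnNge rJ.
exists y'; split.
- move=> K oK; rewrite /y'; case: ifP => _; [exact: (hd K).1|exact: vy].
- apply: (real_eq_mod re hM) => K MK; by rewrite /y' (negbTE MK).
- move=> J oJ rJ Sp c0 s sd; rewrite /T4.D.
  under eq_bigr => a _ do rewrite (Eloc J a oJ rJ).
  case: (eqVneq (rk J) r) => [er|ne].
    have MJ : M J by rewrite /M oJ er Sp c0 !eqxx.
    rewrite /y' MJ; exact: (hd J).2.
  have MJ : ~~ M J by rewrite /M (negbTE ne) andbF.
  rewrite /y' (negbTE MJ); apply: hy => //.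
  by rewrite ltn_neqAle eq_sym ne rJ.
Qed.

Lemma real_eq_pi : real_eq pi.
Proof. by move=> h _; rewrite reach_pi. Qed.

Lemma size_steps_le h : (size (steps t h) <= size h)%N.
Proof.
have := congr1 size (@steps_snd _ _ _ _ (gtree G) h); rewrite size_map size_take => ->.
by case: ifP => // /ltnW.
Qed.

Lemma size_le_sum (h : seq Act) (s : seq (seq Act)) : h \in s -> (size h <= \sum_(h' <- s) size h')%N.
Proof.
elim: s => [|x s IH] //; rewrite in_cons big_cons => /orP[/eqP ->|/IH]; first exact: leq_addr.
by move=> le; apply: leq_trans le (leq_addl _ _).
Qed.

Lemma Qr_base : Qr (\sum_(h <- Nodes G) size h).+1.
Proof.
exists pi; split.
- by move=> K _; apply: vp.
- exact: real_eq_pi.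
- move=> J _ lt; exfalso; move: lt; apply/negP; rewrite -ltnNge ltnS /rk.
  apply: leq_trans (count_size _ _) _; apply: leq_trans (size_steps_le _) _.
  exact: size_le_sum (rep_Nodes G J).
Qed.

Lemma Qr0 : Qr 0.
Proof.
suff: forall n r, (r + n = (\sum_(h <- Nodes G) size h).+1)%N -> Qr r.
  by move=> /(_ _ 0%N erefl).
elim=> [|n IH] r e; first by rewrite addn0 in e; rewrite e; exact: Qr_base.
apply: Qr_step; apply: IH; by rewrite addSnnS.
Qed.

Lemma EU_real y : real_eq y -> EU G i (replace G i y pi) = EU G i pi.
Proof.
move=> re; rewrite /EU big_seq_cond [RHS]big_seq_cond; apply: eq_bigr => h /andP[mh _].
by rewrite re.
Qed.

Lemma seq_opt : Nash G pi -> exists y, [/\ valid_strat G i y, real_eq y &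
   forall J, owner G J = i -> 0 < S J -> forall s, isDist (acts G J) s -> D y J s <= 0].
Proof.
move=> NE; have [y [vy re hy]] := Qr0.
exists y; split => // J oJ Sp s sd.
have [c0|cn] := eqVneq (cc pi J) 0; first exact: hy.
have cgt : 0 < cc y J.
  rewrite (cc_eq re oJ Sp) lt0r cn /=; apply: own_ge0 => //; last exact: rep_Nodes.
  by move=> K b oK bK; apply: (proj1 (vp K)).
have := NE i (deviate y J s).
have vd : valid_strat G i (deviate y J s).
  move=> K oK; rewrite /deviate; case: (eqVneq K J) => [eK|_]; [rewrite eK; exact: sd|exact: vy].
move=> /(_ vd).
have -> : EU G i (replace G i (deviate y J s) pi) = EU G i (deviate (replace G i y pi) J s).
  apply: EU_ext => K b; rewrite /deviate /replace; case: (eqVneq K J) => [->|//].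
  by rewrite oJ eqxx.
rewrite -(EU_real re) -subr_le0 (K1 pi PR wf) //.
by rewrite pmulr_rle0.
Qed.

End PartA.

End T6.
Import T6.

Module T7.

Section Trembles.
Variables (R : realType) (Pl Info Act : finType).
Variable G : game R Pl Info Act.
Notation label := (label R Info Act).
Notation t := (gtree G).
Variable i : Pl.
Variable pi : Info -> Act -> R.
Hypothesis PR : perfect_recall G.
Hypothesis wf : wf_game G.
Hypothesis vp : valid_profile G pi.

Notation cc := (cc G i).
Notation S := (S G i pi).
Notation E := (E G i pi).
Notation D := (D G i pi).

Lemma cvg_E (x : nat -> Info -> Act -> R) y J a :
  (forall K b, (fun k => x k K b) @ \oo --> y K b) ->
  (fun k => E (x k) J a) @ \oo --> E y J a.
Proof.
move=> cx; rewrite /T4.E; apply: cvg_sum_cond => h _ _.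
apply: cvgM; first exact: cvg_cst.
apply: cvg_sum_In => q _; case: ifP => _; last exact: cvg_cst.
apply: cvgM; first exact: cvg_cst.
apply: cvg_prod_In => p _; rewrite /T4.fr /replace.
case: p => [[f|K] b] /=; first exact: cvg_cst.
case: eqP => _; [exact: cx|exact: cvg_cst].
Qed.

Lemma le1_dist (A : {set Act}) (s : Act -> R) a : isDist A s -> a \in A -> s a <= 1.
Proof.
move=> [s0 s1] aA; rewrite -s1 (bigD1 a) //= lerDl sumr_ge0 // => b /andP[bA _].
exact: s0.
Qed.

Definition delt (x : Info -> Act -> R) y J := \sum_(a in acts G J)
  (`|E x J a - E y J a| + `|x J a * E x J a - y J a * E y J a|).

Lemma delt_ge0 x y J : 0 <= delt x y J.
Proof. by rewrite /delt sumr_ge0 // => a _; rewrite addr_ge0. Qed.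

Lemma D_bound x y J s : isDist (acts G J) s -> D x J s <= D y J s + delt x y J.
Proof.
move=> sd; rewrite -lerBlDl /T4.D /delt -sumrB; apply: ler_sum => a aA.
have -> : (s a - x J a) * E x J a - (s a - y J a) * E y J a =
   s a * (E x J a - E y J a) - (x J a * E x J a - y J a * E y J a) by ring.
apply: le_trans (ler_norm _) _; apply: le_trans (ler_normB _ _) _; apply: lerD => //.
rewrite normrM; apply: ler_piMl => //; rewrite ger0_norm; first exact: le1_dist sd aA.
exact: (proj1 sd).
Qed.

Definition tk (k : nat) : R := (k.+1%:R)^-1.
Definition xk (y : Info -> Act -> R) (k : nat) : Info -> Act -> R :=
  fun K a => (1 - tk k) * y K a + tk k / #|acts G K|%:R.
Definition epsk y k := tk k + \sum_(J | owner G J == i) delt (xk y k) y J / S J.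

Lemma tk_gt0 k : 0 < tk k. Proof. by rewrite /tk invr_gt0 ltr0n. Qed.
Lemma tk_le1 k : tk k <= 1. Proof. by rewrite /tk invf_le1 ?ltr0n // ler1n. Qed.
Lemma cvg_tk : tk @ \oo --> 0.
Proof. exact: (@cvg_harmonic R). Qed.

Lemma nA_gt0 K : 0 < #|acts G K|%:R :> R.
Proof. by rewrite ltr0n (proj1 wf). Qed.

Lemma xk_valid y k : valid_strat G i y -> valid_strat G i (xk y k).
Proof.
move=> vy K oK; have [y0 y1] := vy K oK; split.
  move=> a aA; rewrite /xk addr_ge0 //.
    by rewrite mulr_ge0 ?subr_ge0 ?tk_le1 ?y0.
  by rewrite divr_ge0 // ltW // ?tk_gt0 ?nA_gt0.
have e : forall (c : R) n, (0 < n)%N -> c / n%:R *+ n = c.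
  by move=> c n n0; rewrite -[_ *+ _]mulr_natr divfK // pnatr_eq0 -lt0n.
by rewrite /xk big_split /= -mulr_sumr y1 mulr1 sumr_const e ?subrK // (proj1 wf).
Qed.

Lemma xk_pos y k K a : valid_strat G i y -> owner G K = i -> a \in acts G K -> 0 < xk y k K a.
Proof.
move=> vy oK aA; rewrite /xk ltr_wpDl ?mulr_ge0 ?subr_ge0 ?tk_le1 //.
  exact: (proj1 (vy K oK)).
by rewrite divr_gt0 ?tk_gt0 ?nA_gt0.
Qed.

Lemma cvg_xk y K a : (fun k => xk y k K a) @ \oo --> y K a.
Proof.
rewrite /xk -[X in _ --> X]addr0; apply: cvgD.
  rewrite -[X in _ --> X]mul1r; apply: cvgM; last exact: cvg_cst.
  rewrite -[X in _ --> X]subr0; apply: cvgB; [exact: cvg_cst|exact: cvg_tk].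
rewrite -(mul0r (#|acts G K|%:R^-1)); apply: cvgM; [exact: cvg_tk|exact: cvg_cst].
Qed.

Lemma cvg_norm_sub (u : nat -> R) (l : R) : u @ \oo --> l -> (fun k => `|u k - l|) @ \oo --> 0.
Proof.
move=> cu; have := cvg_norm (cvgB cu (cvg_cst l)); rewrite subrr normr0; exact.
Qed.

Lemma cvg_eps y : (epsk y) @ \oo --> 0.
Proof.
rewrite /epsk -[X in _ --> X]addr0; apply: cvgD; first exact: cvg_tk.
suff : (fun k => \sum_(J | owner G J == i) delt (xk y k) y J / S J) @ \oo -->
   \sum_(J | owner G J == i) (0:R) by rewrite big1_eq.
apply: cvg_sum_fin => J _; rewrite -(mul0r (S J)^-1); apply: cvgM; last exact: cvg_cst.
suff : (fun k => delt (xk y k) y J) @ \oo --> \sum_(a in acts G J) (0:R) by rewrite big1_eq.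
apply: cvg_sum_fin => a _; rewrite -(addr0 0); apply: cvgD; apply: cvg_norm_sub.
  by apply: cvg_E => K b; exact: cvg_xk.
apply: cvgM; first exact: cvg_xk.
by apply: cvg_E => K b; exact: cvg_xk.
Qed.

Lemma eps_gt0 y k : 0 < epsk y k.
Proof.
rewrite /epsk ltr_wpDr ?tk_gt0 // sumr_ge0 // => J _.
by rewrite divr_ge0 ?delt_ge0 ?S_ge0.
Qed.

Lemma EDT_rat_of_seqopt y : valid_strat G i y ->
  (forall J, owner G J = i -> 0 < S J -> forall s, isDist (acts G J) s -> D y J s <= 0) ->
  EDT_rational G i pi y.
Proof.
move=> vy so; exists (xk y), (epsk y); split.
  split => //.
  - move=> k; exact: xk_valid.
  - move=> k K a oK aA; exact: xk_pos.
  - move=> K a _ _; exact: cvg_xk.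
  - move=> k; exact: eps_gt0.
  - exact: cvg_eps.
move=> k J s oJ PIp sd.
have cgt : 0 < cc (xk y k) J.
  apply: own_gt0 => //; last exact: rep_Nodes.
  by move=> K b oK bK; apply: xk_pos.
move: PIp; rewrite (K3 pi PR wf (xk y k) oJ) pmulr_rgt0 // => Sp.
rewrite (K1 pi PR wf) // ler_pdivrMr ?mulr_gt0 // mulrCA ler_pM2l //.
apply: le_trans (D_bound (xk y k) y sd) _.
apply: le_trans (lerD (so J oJ Sp s sd) (lexx _)) _; rewrite add0r.
have -> : delt (xk y k) y J = delt (xk y k) y J / S J * S J.
  by rewrite divfK // lt0r_neq0.
apply: ler_wpM2r; first exact: S_ge0.
apply: (@le_trans _ _ (\sum_(J' | owner G J' == i) delt (xk y k) y J' / S J')).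
  rewrite (bigD1 J) ?oJ ?eqxx //= lerDl sumr_ge0 // => K _.
  by rewrite divr_ge0 ?delt_ge0 ?S_ge0.
by rewrite /epsk lerDr ltW ?tk_gt0.
Qed.

End Trembles.

End T7.
Import T7.

Unset Implicit Arguments.
Theorem proposition4 (R : realType) (Pl Info Act : finType)
  (G : game R Pl Info Act) (pi : Info -> Act -> R) :
  wf_game G -> valid_profile G pi ->
  [/\ EDT_Nash G pi -> EDT_eq G pi,
      ~ absentminded G -> (EDT_Nash G pi <-> CDT_Nash G pi)
    & perfect_recall G -> (EDT_Nash G pi <-> Nash G pi)].
Proof.
move=> wf vp; split.
- by case.
- by move=> nAM; apply: part2.
- move=> PR; split.
  + case=> _ h i z vz; have [y [vy ry re]] := h i.
    rewrite -(EU_real re); exact: (partB_player PR wf vp vy ry vz).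
  + move=> NE; split.
    * move=> I s sd; have := NE (owner G I) (deviate pi I s).
      have vd : valid_strat G (owner G I) (deviate pi I s).
        move=> K oK; rewrite /deviate; case: (eqVneq K I) => [eK|_]; [rewrite eK; exact: sd|exact: vp].
      move=> /(_ vd).
      have -> // : EU G (owner G I) (replace G (owner G I) (deviate pi I s) pi) = EU G (owner G I) (deviate pi I s).
      apply: EU_ext => K b; rewrite /replace /deviate; case: (eqVneq K I) => [->|ne].
        by rewrite eqxx.
      by case: ifP.
    * move=> i; have [y [vy re so]] := seq_opt i PR wf vp NE.
      exists y; split => //; exact: EDT_rat_of_seqopt.
Qed.
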